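(* With an even number of agents $n=2p$, the modified RC mechanism subgame perfect implements the majority correspondence $Maj$ in the following sense: for every preference profile $R$ with $|Maj(R)|=1$, every subgame-perfect equilibrium yields $Maj(R)$ and some subgame-perfect equilibrium yields $Maj(R)$; and for every $R$ with $Maj(R)=\{a,b\}$, a subgame-perfect equilibrium exists, any lottery over $A$ being an admissible equilibrium outcome.
   Context: Agents $I=\{1,\dots,n\}$, $n=2p$, options $A=\{a,b\}$, strict preferences, complete information; lotteries compared by stochastic dominance (an agent preferring $x$ weakly (strictly) prefers $\beta$ to $\eta$ iff $\beta(x)\ge\eta(x)$ ($>$)). Majority correspondence: $Maj(R)=a$ if at least $p+1$ agents prefer $a$, $Maj(R)=b$ if at least $p+1$ agents prefer $b$, and $Maj(R)=\{a,b\}$ otherwise. Modified RC mechanism: Voting stage: each agent simultaneously votes $v_i\in A$; the profile $v$ is publicly announced. If $a$ and $b$ receive equally many votes, the outcome is the lottery giving probability $1/2$ to each option. Otherwise the option with more votes is the Voting-stage winner, and in the Confirmation stage $p+1$ agents are drawn uniformly at random and ordered uniformly, $\pi_1,\dots,\pi_{p+1}$; sequentially, as long as nobody has announced $Y$, agent $\pi_t$ announces $Y$ or $N$. If some agent announces $Y$ the outcome is the Voting-stage winner; if all announce $N$ the outcome is the lottery $\beta(v)$ with $\beta_a(v)=|\{i:v_i=a\}|/n$, $\beta_b(v)=1-\beta_a(v)$. *)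

(* Defs.v *)
From HB Require Import structures.
From mathcomp Require Import all_boot all_order all_algebra.
Set Implicit Arguments.
Unset Strict Implicit.
Unset Printing Implicit Defensive.
Import Order.TTheory GRing.Theory Num.Theory.
Local Open Scope ring_scope.

(* Conventions.
   - Agents: 'I_(p.*2), i.e. n = 2p.
   - Options A = {a,b} are encoded by bool: true = a, false = b.
   - A strict preference of an agent over {a,b} is its top option, so a
     profile R is a map agent -> bool (R i = true iff i prefers a).
   - A lottery over A is represented by its probability of a (a rational);
     lprob l x is the probability it gives to option x. *)

Definition agent (p : nat) := 'I_(p.*2).
Definition vprof (p : nat) := agent p -> bool.
Definition draw (p : nat) := {ffun 'I_p.+1 -> agent p}.
(* The Confirmation-stage draw: p+1 distinct agents in uniformly random order,
   i.e. a uniformly random injective sequence. *)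
Definition draws (p : nat) : {set draw p} := [set f : draw p | injectiveb f].
(* Confirmation strategy: at decision node (v, pi, t) (all of pi_1..pi_{t-1}
   announced N), announce Y (true) or N (false). *)
Definition cstrat (p : nat) := vprof p -> draw p -> 'I_p.+1 -> bool.
Definition profile (p : nat) := ((agent p -> bool) * (agent p -> cstrat p))%type.

Definition lottery := rat.
Definition lprob (l : lottery) (x : bool) : rat := if x then l else 1 - l.

Definition nvotes_a p (v : vprof p) : nat := #|[set i | v i]|.
Definition tie p (v : vprof p) : bool := nvotes_a v == p.
(* Voting-stage winner (meaningful when not a tie): true = a. *)
Definition winner p (v : vprof p) : bool := (p < nvotes_a v)%N.
Definition beta p (v : vprof p) : lottery := (nvotes_a v)%:R / (p.*2)%:R.

(* Outcome of the confirmation play from step t on (steps < t announced N). *)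
Definition cont_outcome p (c : agent p -> cstrat p) (v : vprof p) (f : draw p)
    (t : nat) : lottery :=
  if [exists t' : 'I_p.+1, (t <= t')%N && c (f t') v f t']
  then (if winner v then 1 else 0) else beta v.

Definition nature_outcome p (c : agent p -> cstrat p) (v : vprof p) : lottery :=
  (\sum_(f in draws p) cont_outcome c v f 0) / (#|draws p|)%:R.

Definition outcome p (s : profile p) : lottery :=
  if tie s.1 then 2^-1 else nature_outcome s.2 s.1.

Definition upd (T : Type) p (g : agent p -> T) (i : agent p) (x : T) : agent p -> T :=
  fun j => if j == i then x else g j.

Definition strictly_prefers p (R : agent p -> bool) (i : agent p) (l1 l2 : lottery) : Prop :=
  lprob l2 (R i) < lprob l1 (R i).

(* Subgame perfect equilibrium: no profitable unilateral deviation in any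
   subgame (root, each Confirmation-stage subgame after a non-tied vote,
   each decision node of the Confirmation stage). *)
Definition SPE p (R : agent p -> bool) (s : profile p) : Prop :=
  [/\ (forall i x c', ~ strictly_prefers R i
          (outcome (upd s.1 i x, upd s.2 i c')) (outcome s)),
      (forall v : vprof p, ~~ tie v -> forall i c', ~ strictly_prefers R i
          (nature_outcome (upd s.2 i c') v) (nature_outcome s.2 v)) &
      (forall v : vprof p, ~~ tie v -> forall f, f \in draws p ->
        forall (t : 'I_p.+1) i c', ~ strictly_prefers R i
          (cont_outcome (upd s.2 i c') v f t) (cont_outcome s.2 v f t))].

Definition Maj p (R : agent p -> bool) : {set bool} :=
  if (p.+1 <= #|[set i | R i]|)%N then [set true]
  else if (p.+1 <= #|[set i | ~~ R i]|)%N then [set false]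
  else [set: bool].

Definition supp (l : lottery) : {set bool} := [set x | lprob l x != 0].

(* Main.v *)
Require Import Defs.
From HB Require Import structures.
From mathcomp Require Import all_boot all_order all_algebra.
From mathcomp Require Import zify ring lra.
From Stdlib Require Import FunctionalExtensionality.
Set Implicit Arguments. Unset Strict Implicit. Unset Printing Implicit Defensive.
Import Order.TTheory GRing.Theory Num.Theory.
Local Open Scope ring_scope.

Definition wv (b : bool) : rat := if b then 1 else 0.
Definition nv p (v : vprof p) (x : bool) : nat := #|[set j | v j == x]|.

Lemma lprob_wv b x : lprob (wv b) x = (b == x)%:R.
Proof. by case: b; case: x; rewrite /= ?subr0 ?subrr. Qed.

Lemma lprobN l x : lprob l (~~ x) = 1 - lprob l x.
Proof. case: x => /=; ring. Qed.

Lemma lprob_eq1 l w : lprob l w = 1 -> l = wv w.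
Proof. case: w => //= H; rewrite /wv; lra. Qed.

Lemma nvC p (v : vprof p) x : (nv v x + nv v (~~x) = p.*2)%N.
Proof.
rewrite /nv.
have E : [set j | v j == ~~x] = ~: [set j | v j == x].
  apply/setP => j. by rewrite !inE; case: (v j); case: x.
by rewrite E cardsC card_ord.
Qed.

Lemma nva_nv p (v : vprof p) : nvotes_a v = nv v true.
Proof. rewrite /nvotes_a /nv; apply: eq_card => j; rewrite !inE; by case: (v j). Qed.

Lemma tie_nv p (v : vprof p) x : tie v = (nv v x == p).
Proof.
rewrite /tie nva_nv; case: x => //.
have := nvC v true => /= H; apply/eqP/eqP; lia.
Qed.

Lemma winner_nv p (v : vprof p) x : ~~ tie v -> (winner v == x) = (p < nv v x)%N.
Proof.
rewrite /winner (tie_nv _ true) -nva_nv.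
have := nvC v true; rewrite nva_nv /= => H; case: x => /= Ht.
  by rewrite eqb_id.
apply/idP/idP; rewrite eqbF_neg ?negbK; lia.
Qed.

Lemma lprob_beta p (hp : (0 < p)%N) (v : vprof p) x :
  lprob (beta v) x = (nv v x)%:R / (p.*2)%:R.
Proof.
have H2 : (p.*2)%:R != 0 :> rat by rewrite pnatr_eq0 double_eq0 -lt0n.
rewrite /beta nva_nv; case: x => //=.
have := nvC v true => /= H.
have -> : (nv v false)%:R = (p.*2)%:R - (nv v true)%:R :> rat.
  by rewrite -H natrD; ring.
by field.
Qed.

Lemma beta_ge0 p (v : vprof p) x : 0 <= (nv v x)%:R / (p.*2)%:R :> rat.
Proof. by rewrite divr_ge0 ?ler0n. Qed.

Lemma beta_le1 p (hp : (0 < p)%N) (v : vprof p) x : (nv v x)%:R / (p.*2)%:R <= 1 :> rat.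
Proof.
have H2 : (0 < (p.*2)%:R :> rat) by rewrite ltr0n double_gt0.
rewrite ler_pdivrMr // mul1r ler_nat.
by have := nvC v x => <-; rewrite leq_addr.
Qed.

Lemma lprob_wv01 b x : 0 <= lprob (wv b) x <= 1.
Proof. by rewrite lprob_wv; case: (b == x). Qed.

Lemma lprob_beta01 p (hp : (0 < p)%N) (v : vprof p) x : 0 <= lprob (beta v) x <= 1.
Proof. by rewrite lprob_beta // beta_ge0 beta_le1. Qed.

Lemma cont_wv p (c : agent p -> cstrat p) v f t :
  cont_outcome c v f t =
  if [exists t' : 'I_p.+1, (t <= t')%N && c (f t') v f t'] then wv (winner v) else beta v.
Proof. by []. Qed.

Lemma lprob_cont01 p (hp : (0 < p)%N) (c : agent p -> cstrat p) v f t x :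
  0 <= lprob (cont_outcome c v f t) x <= 1.
Proof. rewrite cont_wv; case: ifP => _; [exact: lprob_wv01 | exact: lprob_beta01]. Qed.

Lemma draws_exists p (S : {set agent p}) : (p.+1 <= #|S|)%N ->
  exists2 f : draw p, f \in draws p & forall j, f j \in S.
Proof.
move=> H.
exists [ffun j : 'I_p.+1 => @enum_val _ (mem S) (widen_ord H j)].
  rewrite inE; apply/injectiveP => i j; rewrite !ffunE => /enum_val_inj.
  by move=> /(congr1 val) /= /val_inj.
by move=> j; rewrite ffunE; apply: enum_valP.
Qed.

Lemma draws_card_gt0 p (hp : (0 < p)%N) : (0 < #|draws p|)%N.
Proof.
have [|f fin _] := @draws_exists p [set: agent p].
  rewrite cardsT card_ord; lia.
by apply/card_gt0P; exists f.
Qed.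

Lemma lprob_avg p (hp : (0 < p)%N) (g : draw p -> lottery) x :
  lprob ((\sum_(f in draws p) g f) / (#|draws p|)%:R) x =
  (\sum_(f in draws p) lprob (g f) x) / (#|draws p|)%:R.
Proof.
have HN : (#|draws p|)%:R != 0 :> rat by rewrite pnatr_eq0 -lt0n draws_card_gt0.
case: x => //=.
rewrite sumrB sumr_const.
set S := \sum_(i in _) _.
rewrite -[1 *+ _]/((#|draws p|)%:R).
by field.
Qed.

Lemma lprob_nature p (hp : (0 < p)%N) (c : agent p -> cstrat p) v x :
  lprob (nature_outcome c v) x =
  (\sum_(f in draws p) lprob (cont_outcome c v f 0) x) / (#|draws p|)%:R.
Proof. by rewrite /nature_outcome lprob_avg. Qed.

Lemma nature_one p (hp : (0 < p)%N) (c : agent p -> cstrat p) v x :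
  (forall f, f \in draws p -> lprob (cont_outcome c v f 0) x = 1) ->
  lprob (nature_outcome c v) x = 1.
Proof.
move=> H; rewrite lprob_nature // (eq_bigr (fun _ => 1)) // sumr_const.
by rewrite -[1 *+ _]/((#|draws p|)%:R) divff // pnatr_eq0 -lt0n draws_card_gt0.
Qed.

Lemma nature_le p (hp : (0 < p)%N) (c1 c2 : agent p -> cstrat p) v1 v2 x :
  (forall f, f \in draws p -> lprob (cont_outcome c1 v1 f 0) x <= lprob (cont_outcome c2 v2 f 0) x) ->
  lprob (nature_outcome c1 v1) x <= lprob (nature_outcome c2 v2) x.
Proof.
move=> H; rewrite !lprob_nature //.
have HN : 0 < (#|draws p|)%:R :> rat by rewrite ltr0n draws_card_gt0.
by rewrite ler_pM2r ?invr_gt0 //; apply: ler_sum.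
Qed.

Lemma nature_lt p (hp : (0 < p)%N) (c1 c2 : agent p -> cstrat p) v1 v2 x f0 :
  (forall f, f \in draws p -> lprob (cont_outcome c1 v1 f 0) x <= lprob (cont_outcome c2 v2 f 0) x) ->
  f0 \in draws p -> lprob (cont_outcome c1 v1 f0 0) x < lprob (cont_outcome c2 v2 f0 0) x ->
  lprob (nature_outcome c1 v1) x < lprob (nature_outcome c2 v2) x.
Proof.
move=> H Hf0 Hlt; rewrite !lprob_nature //.
have HN : 0 < (#|draws p|)%:R :> rat by rewrite ltr0n draws_card_gt0.
rewrite ltr_pM2r ?invr_gt0 // (bigD1 f0) //= [X in _ < X](bigD1 f0) //=.
by apply: ltr_leD => //; apply: ler_sum => f /andP[Hf _]; apply: H.
Qed.

Lemma nature_le_const p (hp : (0 < p)%N) (c : agent p -> cstrat p) v x (a : rat) :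
  (forall f, f \in draws p -> lprob (cont_outcome c v f 0) x <= a) ->
  lprob (nature_outcome c v) x <= a.
Proof.
move=> H; rewrite lprob_nature //.
have HN : 0 < (#|draws p|)%:R :> rat by rewrite ltr0n draws_card_gt0.
rewrite ler_pdivrMr //.
have -> : a * (#|draws p|)%:R = \sum_(f in draws p) a by rewrite sumr_const mulr_natr.
by apply: ler_sum.
Qed.

Lemma nature01 p (hp : (0 < p)%N) (c : agent p -> cstrat p) v x :
  lprob (nature_outcome c v) x <= 1.
Proof. apply: nature_le_const => // f _; by case/andP: (lprob_cont01 hp c v f 0 x). Qed.

Lemma outcome01 p (hp : (0 < p)%N) (s : profile p) x : lprob (outcome s) x <= 1.
Proof. rewrite /outcome; case: ifP => _; last exact: nature01. by case: x => /=; lra. Qed.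

Lemma notsp p (R : agent p -> bool) i l1 l2 :
  ~ strictly_prefers R i l1 l2 <-> lprob l1 (R i) <= lprob l2 (R i).
Proof.
rewrite /strictly_prefers; split.
  by move=> H; rewrite leNgt; apply/negP.
by move=> H H'; move: H; rewrite leNgt H'.
Qed.

Definition C3 p (R : agent p -> bool) (c : agent p -> cstrat p) :=
  forall v : vprof p, ~~ tie v -> forall f, f \in draws p ->
    forall (t : 'I_p.+1) i c', ~ strictly_prefers R i
      (cont_outcome (upd c i c') v f t) (cont_outcome c v f t).

Lemma C3_C2 p (hp : (0 < p)%N) R (c : agent p -> cstrat p) : C3 R c ->
  forall v : vprof p, ~~ tie v -> forall i c', ~ strictly_prefers R i
          (nature_outcome (upd c i c') v) (nature_outcome c v).
Proof.
move=> H v Hv i c'; apply/notsp; apply: nature_le => // f Hf.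
by apply/notsp; apply: (H v Hv f Hf ord0).
Qed.

Lemma L1 p (hp : (0 < p)%N) R (c : agent p -> cstrat p) v f j : C3 R c ->
  ~~ tie v -> f \in draws p -> R (f j) = winner v ->
  cont_outcome c v f 0 = wv (winner v).
Proof.
move=> H3 Hv Hf Hj.
rewrite cont_wv; case: ifP => // /negbT E.
have := H3 v Hv f Hf ord0 (f j) (fun _ _ _ => true).
move/notsp; rewrite !cont_wv.
have -> : [exists t' : 'I_p.+1, (@ord0 p <= t')%N && upd c (f j) (fun _ _ _ => true) (f t') v f t'] = true.
  by apply/existsP; exists j; rewrite /upd eqxx.
rewrite (negbTE E) Hj lprob_wv eqxx => Hle.
apply: lprob_eq1; case/andP: (lprob_beta01 hp v (winner v)) => _ H1. have Hle1 : 1 <= lprob (beta v) (winner v) by []. lra.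
Qed.

Lemma L2 p (hp : (0 < p)%N) R (c : agent p -> cstrat p) v f : C3 R c ->
  ~~ tie v -> f \in draws p -> (forall j, R (f j) != winner v) ->
  0 < lprob (beta v) (~~ winner v) ->
  cont_outcome c v f 0 = beta v.
Proof.
move=> H3 Hv Hf Hj Hpos.
rewrite cont_wv; case: ifP => // /existsP [t0 /andP [_ Ht0]].
case: (@arg_maxnP _ t0 (fun t => c (f t) v f t) (fun t => val t) Ht0) => tm Ptm Hmax.
have := H3 v Hv f Hf tm (f tm) (fun _ _ _ => false).
move/notsp; rewrite !cont_wv.
have -> : [exists t' : 'I_p.+1, (tm <= t')%N && upd c (f tm) (fun _ _ _ => false) (f t') v f t'] = false.
  apply/existsP => -[t' /andP [Hle]]; rewrite /upd; case: eqP => // Hne Ht'.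
  have := Hmax t' Ht' => /= Hle2.
  have Heq : t' = tm by apply/val_inj/eqP; rewrite eqn_leq Hle Hle2.
  by apply: Hne; rewrite Heq.
have -> : [exists t' : 'I_p.+1, (tm <= t')%N && c (f t') v f t'] = true.
  by apply/existsP; exists tm; rewrite leqnn.
have Hr : R (f tm) = ~~ winner v by move: (Hj tm); case: (R (f tm)); case: (winner v).
rewrite Hr lprob_wv.
have -> : (winner v == ~~ winner v) = false by case: (winner v).
move=> Hle; exfalso; have Hle0 : lprob (beta v) (~~ winner v) <= 0 by [].
lra.
Qed.

Definition cstar p (R : agent p -> bool) : agent p -> cstrat p :=
  fun i v f t => R i == winner v.

Lemma cstar_C3 p (hp : (0 < p)%N) (R : agent p -> bool) : C3 R (cstar R).
Proof.
move=> v _ f _ t i c'; apply/notsp; rewrite !cont_wv.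
case: (boolP (R i == winner v)) => Hi.
  case E: [exists t' : 'I_p.+1, (t <= t')%N && cstar R (f t') v f t'].
    rewrite lprob_wv eq_sym Hi.
    by case: ifP => _; [case/andP: (lprob_wv01 (winner v) (R i)) | case/andP: (lprob_beta01 hp v (R i))].
  have -> : [exists t' : 'I_p.+1, (t <= t')%N && upd (cstar R) i c' (f t') v f t'] = false.
    apply/existsP => -[t' /andP [Hle]]; rewrite /upd; case: eqP => [Heq _ | _ H].
      move/negbT: E => /existsP; apply; exists t'; rewrite Hle /cstar Heq; exact: Hi.
    move/negbT: E => /existsP; apply; exists t'; by rewrite Hle H.
  by [].
case E: [exists t' : 'I_p.+1, (t <= t')%N && cstar R (f t') v f t'].
  have -> : [exists t' : 'I_p.+1, (t <= t')%N && upd (cstar R) i c' (f t') v f t'] = true.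
    case/existsP: E => t' /andP [Hle H]; apply/existsP; exists t'; rewrite Hle /upd.
    case: eqP => [Heq | _ //]; move: H; rewrite /cstar Heq => H; by rewrite H in Hi.
  by [].
case: ifP => _ //.
rewrite lprob_wv eq_sym (negbTE Hi).
by case/andP: (lprob_beta01 hp v (R i)).
Qed.

Lemma nature_le_beta p (hp : (0 < p)%N) (c : agent p -> cstrat p) v x :
  winner v != x ->
  lprob (nature_outcome c v) x <= (nv v x)%:R / (p.*2)%:R.
Proof.
move=> Hw; apply: nature_le_const => // f _; rewrite cont_wv.
case: ifP => _; last by rewrite lprob_beta.
by rewrite lprob_wv (negbTE Hw) beta_ge0.
Qed.

Lemma upd_id (T : Type) p (g : agent p -> T) i : upd g i (g i) = g.
Proof. apply: functional_extensionality => j; rewrite /upd; by case: eqP => // ->. Qed.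

Lemma cont_le_beta p (hp : (0 < p)%N) (c : agent p -> cstrat p) v f t x :
  winner v != x ->
  lprob (cont_outcome c v f t) x <= (nv v x)%:R / (p.*2)%:R.
Proof.
move=> Hw; rewrite cont_wv.
case: ifP => _; last by rewrite lprob_beta.
by rewrite lprob_wv (negbTE Hw) beta_ge0.
Qed.

Lemma cont_Y p (c : agent p -> cstrat p) v (f : draw p) (t : nat) (j : 'I_p.+1) :
  (t <= j)%N -> c (f j) v f j -> cont_outcome c v f t = wv (winner v).
Proof. move=> Ht Hc; rewrite cont_wv; case: ifP => //; move/negbT/existsP; case; by exists j; rewrite Ht Hc. Qed.

Lemma draw_meets p (S : {set agent p}) (f : draw p) : f \in draws p ->
  (p.*2 < #|S| + p.+1)%N -> exists j, f j \in S.
Proof.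
move=> Hf Hc; case: (boolP [exists j, f j \in S]) => [/existsP //|/existsPn H].
exfalso.
have Hinj : injective f by move: Hf; rewrite inE => /injectiveP.
have Hsub : f @: [set: 'I_p.+1] \subset ~: S.
  apply/subsetP => y /imsetP [j _ ->]; rewrite inE; exact: H.
have := subset_leq_card Hsub; rewrite card_imset // cardsT card_ord.
have := cardsC S; rewrite card_ord => E.
have E2 : (#|S| + #|~: S| = p + p)%N by rewrite E addnn.
move: Hc E2; set a := #|S|; set b := #|~: S|.
lia.
Qed.

Lemma supp_sub (l : lottery) w : lprob l w = 1 -> supp l \subset [set w].
Proof.
move=> H; apply/subsetP => x; rewrite !inE.
case: (eqVneq x w) => [Heq|Hne]; first by [].
have -> : x = ~~ w by move: Hne; case: (x); case: (w).
by rewrite lprobN H subrr eqxx.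
Qed.

Lemma nv_upd p (v : vprof p) i x : v i != x -> nv (upd v i x) x = (nv v x).+1.
Proof.
move=> Hv; rewrite /nv.
have -> : [set j | upd v i x j == x] = i |: [set j | v j == x].
  apply/setP => j; rewrite !inE /upd; case: (eqVneq j i) => [->|_] //; by rewrite !eqxx.
by rewrite cardsU1 inE (negbTE Hv).
Qed.

Lemma nv_upd_lt p (v : vprof p) i x y : v i == y -> x != y -> (nv (upd v i x) y < nv v y)%N.
Proof.
move=> Hv Hxy; rewrite /nv.
have Hs : [set j | upd v i x j == y] \subset [set j | v j == y] :\ i.
  apply/subsetP => j; rewrite !inE /upd; case: (eqVneq j i) => [->|Hne] //.
    by rewrite (negbTE Hxy).
have := subset_leq_card Hs.
rewrite (cardsD1 i [set j | v j == y]) inE Hv /= add1n.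
by rewrite ltnS.
Qed.

Lemma nv_upd_ge p (v : vprof p) i x y : v i != y -> (nv v y <= nv (upd v i x) y)%N.
Proof.
move=> Hv; rewrite /nv; apply: subset_leq_card; apply/subsetP => j; rewrite !inE /upd.
by case: (eqVneq j i) => [->|_] // H; rewrite H in Hv.
Qed.

Lemma half_lt p k : (k < p)%N -> k%:R / (p.*2)%:R < 2^-1 :> rat.
Proof.
move=> H.
have Hp : 0 < (p.*2)%:R :> rat by rewrite ltr0n double_gt0; lia.
rewrite ltr_pdivrMr // -muln2 natrM.
have : k.+1%:R <= p%:R :> rat by rewrite ler_nat.
rewrite -addn1 natrD => H'.
lra.
Qed.

Lemma lprob_half x : lprob (2^-1) x = 2^-1.
Proof. case: x => //=; field. Qed.

Lemma maj_one p (R : agent p -> bool) : #|Maj R| = 1%N ->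
  exists w, Maj R = [set w] /\ (p.+1 <= nv R w)%N.
Proof.
rewrite /Maj; case: ifP => H1.
  move=> _; exists true; split => //.
  by move: H1; rewrite /nv (@eq_card _ _ [set i | R i]) // => j; rewrite !inE; case: (R j).
case: ifP => H2.
  move=> _; exists false; split => //.
  by move: H2; rewrite /nv (@eq_card _ _ [set i | ~~ R i]) // => j; rewrite !inE; case: (R j).
by rewrite cardsT card_bool.
Qed.

Lemma maj_all p (R : agent p -> bool) : Maj R = [set: bool] -> forall x, (nv R x <= p)%N.
Proof.
rewrite /Maj; case: ifP => H1.
  by move/setP/(_ false); rewrite !inE.
case: ifP => H2.
  by move/setP/(_ true); rewrite !inE.
move=> _ x; case: x.
  rewrite /nv (@eq_card _ _ [set i | R i]); first by rewrite leqNgt H1.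
  by move=> j; rewrite !inE; case: (R j).
rewrite /nv (@eq_card _ _ [set i | ~~ R i]); first by rewrite leqNgt H2.
by move=> j; rewrite !inE; case: (R j).
Qed.

Lemma winner_neq p (v : vprof p) w : winner v != w -> winner v = ~~ w.
Proof. by case: (winner v); case: w. Qed.

Lemma part1a p (hp : (0 < p)%N) (R : agent p -> bool) w (s : profile p) :
  (p.+1 <= nv R w)%N -> SPE R s -> lprob (outcome s) w = 1.
Proof.
case: s => v c Hw [] /= H1 _ H3.
have H3' : C3 R c by exact: H3.
have HdW : forall f : draw p, f \in draws p -> exists j, R (f j) = w.
  move=> f Hf; have [|j Hj] := @draw_meets p [set j | R j == w] f Hf.
    by rewrite -/(nv R w); lia.
  by exists j; move: Hj; rewrite inE => /eqP.
have winW : forall v', ~~ tie v' -> winner v' = w -> lprob (nature_outcome c v') w = 1.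
  move=> v' Ht Hwin; apply: nature_one => // f Hf.
  have [j Hj] := HdW f Hf.
  rewrite (@L1 p hp R c v' f j H3' Ht Hf); last by rewrite Hj Hwin.
  by rewrite Hwin lprob_wv eqxx.
have [Hk|Hk] := ltnP p (nv v w).
  have Ht : ~~ tie v by rewrite (tie_nv v w) neq_ltn Hk orbT.
  rewrite /outcome /= (negbTE Ht); apply: winW => //.
  by have := winner_nv w Ht; rewrite Hk => /eqP.
exfalso.
have : ~~ ([set j | R j == w] \subset [set j | v j == w]).
  apply/negP => Hs; have := subset_leq_card Hs.
  rewrite -/(nv R w) -/(nv v w); lia.
case/subsetPn => i; rewrite !inE => /eqP HRi Hvi.
have := H1 i w (c i); rewrite upd_id; move/notsp; rewrite HRi.
have Hk1 := nv_upd Hvi.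
set v' := upd v i w.
case: (eqVneq (nv v w) p) => Hkp.
  have Ht : tie v by rewrite (tie_nv v w) Hkp.
  have Ht' : ~~ tie v' by rewrite (tie_nv v' w) Hk1 Hkp; apply/negP => /eqP; lia.
  rewrite /outcome /= Ht (negbTE Ht') winW //; last first.
    by have := winner_nv w Ht'; rewrite Hk1 Hkp ltnSn => /eqP.
  rewrite lprob_half => H; have : (1 : rat) <= 2^-1 by []. lra.
have Hkp' : (nv v w < p)%N by rewrite ltn_neqAle Hkp Hk.
have Ht : ~~ tie v by rewrite (tie_nv v w) (negbTE Hkp).
have Hwv : winner v != w by rewrite winner_nv // -leqNgt.
have Hbound := nature_le_beta hp c Hwv.
case: (eqVneq (nv v w).+1 p) => Hk1p.
  have Ht' : tie v' by rewrite (tie_nv v' w) Hk1 Hk1p.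
  rewrite /outcome /= (negbTE Ht) Ht' lprob_half => H.
  have := half_lt Hkp'; lra.
have Hk1p' : ((nv v w).+1 < p)%N by rewrite ltn_neqAle Hk1p Hkp'.
have Ht' : ~~ tie v' by rewrite (tie_nv v' w) Hk1 (negbTE Hk1p).
have Hwv' : winner v' != w by rewrite winner_nv // Hk1 -leqNgt ltnW.
rewrite /outcome /= (negbTE Ht) (negbTE Ht').
apply/negP; rewrite -ltNge.
have [f0 Hf0 Hf0W] := @draws_exists p [set j | R j == w] Hw.
have Hpos : (0 : rat) < (nv v' w)%:R / (p.*2)%:R.
  by rewrite divr_gt0 // ?ltr0n ?double_gt0 // Hk1.
have Hlt : (nv v w)%:R / (p.*2)%:R < (nv v' w)%:R / (p.*2)%:R :> rat.
  by rewrite ltr_pM2r ?invr_gt0 ?ltr0n ?double_gt0 // ltr_nat Hk1.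
have Wdraw : forall f, f \in draws p -> (forall j, f j \in [set j | R j == w]) ->
    lprob (cont_outcome c v f 0) w < lprob (cont_outcome c v' f 0) w.
  move=> f Hf HfW.
  rewrite (@L2 p hp R c v' f H3' Ht' Hf).
  - rewrite lprob_beta //; apply: le_lt_trans Hlt; exact: cont_le_beta.
  - move=> j; move: (HfW j); rewrite inE => /eqP ->; by rewrite eq_sym.
  - by rewrite (winner_neq Hwv') negbK lprob_beta.
apply: (@nature_lt p hp c c v v' w f0) => //; last exact: Wdraw.
move=> f Hf.
case: (boolP [forall j, f j \in [set j | R j == w]]) => [/forallP HfW | /forallPn [j Hj]].
  exact/ltW/Wdraw.
have HRj : R (f j) = ~~ w by move: Hj; rewrite inE; case: (R (f j)); case: (w).
rewrite (@L1 p hp R c v f j H3' Ht Hf); last by rewrite HRj (winner_neq Hwv).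
rewrite (@L1 p hp R c v' f j H3' Ht' Hf); last by rewrite HRj (winner_neq Hwv').
by rewrite (winner_neq Hwv) (winner_neq Hwv').
Qed.

Lemma part1b p (hp : (0 < p)%N) (R : agent p -> bool) w :
  (p.+1 <= nv R w)%N -> SPE R (R, cstar R) /\ lprob (outcome (R, cstar R)) w = 1.
Proof.
move=> Hw.
have HdW : forall f : draw p, f \in draws p -> exists j, R (f j) = w.
  move=> f Hf; have [|j Hj] := @draw_meets p [set j | R j == w] f Hf.
    by rewrite -/(nv R w); lia.
  by exists j; move: Hj; rewrite inE => /eqP.
have Ht : ~~ tie R by rewrite (tie_nv R w) neq_ltn Hw orbT.
have Hwin : winner R = w by have := winner_nv w Ht; rewrite Hw => /eqP.
have Horig : lprob (outcome (R, cstar R)) w = 1.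
  rewrite /outcome /= (negbTE Ht); apply: nature_one => // f Hf; have [j Hj] := HdW f Hf.
  rewrite (@cont_Y p (cstar R) R f 0 j) //; first by rewrite Hwin lprob_wv eqxx.
  by rewrite /cstar Hj Hwin.
split => //; split => /=.
- move=> i x c'; apply/notsp.
  case: (eqVneq (R i) w) => HRi.
    rewrite HRi Horig; exact: outcome01.
  have HRi' : R i = ~~ w by move: HRi; case: (R i); case: (w).
  have Hk := nv_upd_ge x HRi.
  set v' := upd R i x.
  have Ht' : ~~ tie v' by rewrite (tie_nv v' w) neq_ltn (leq_trans Hw Hk) orbT.
  have Hwin' : winner v' = w by have := winner_nv w Ht'; rewrite (leq_trans Hw Hk) => /eqP.
  have Hdev : lprob (outcome (v', upd (cstar R) i c')) w = 1.
    rewrite /outcome /= (negbTE Ht'); apply: nature_one => // f Hf; have [j Hj] := HdW f Hf.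
    rewrite (@cont_Y p _ v' f 0 j) //; first by rewrite Hwin' lprob_wv eqxx.
    have Hne : f j != i by apply/negP => /eqP Heq; move: HRi; rewrite -Heq Hj eqxx.
    by rewrite /upd (negbTE Hne) /cstar Hj Hwin'.
  by rewrite HRi' !lprobN Hdev Horig.
- exact: (C3_C2 hp (@cstar_C3 p hp R)).
- exact: (@cstar_C3 p hp R).
Qed.

Lemma part2 p (hp : (0 < p)%N) (R : agent p -> bool) :
  (forall x, (nv R x <= p)%N) -> SPE R (R, cstar R).
Proof.
move=> Hle.
have Ht : tie R.
  rewrite (tie_nv R true); have := nvC R true; have := Hle true; have := Hle false.
  move=> /= H1 H2; rewrite -addnn => H3; apply/eqP. lia.
split => /=.
- move=> i x c'; apply/notsp.
  case: (eqVneq x (R i)) => Hx.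
    by rewrite Hx upd_id /outcome /= Ht.
  have Hlt := nv_upd_lt (eqxx (R i)) Hx.
  set v' := upd R i x.
  have Hlt' : (nv v' (R i) < p)%N by apply: leq_trans Hlt (Hle _).
  have Ht' : ~~ tie v' by rewrite (tie_nv v' (R i)) neq_ltn Hlt'.
  have Hw' : winner v' != R i by rewrite winner_nv // -leqNgt ltnW.
  rewrite /outcome /= Ht (negbTE Ht') lprob_half.
  apply: le_trans (nature_le_beta hp _ Hw') _; exact/ltW/half_lt.
- exact: (C3_C2 hp (@cstar_C3 p hp R)).
- exact: (@cstar_C3 p hp R).
Qed.

Local Close Scope ring_scope.

Theorem claim2 (p : nat) (hp : (0 < p)%N) :
  (forall R : agent p -> bool, #|Maj R| = 1%N ->
     (forall s : profile p, SPE R s -> supp (outcome s) \subset Maj R) /\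
     (exists s : profile p, SPE R s /\ supp (outcome s) \subset Maj R)) /\
  (forall R : agent p -> bool, Maj R = [set: bool] ->
     exists s : profile p, SPE R s).
Proof.
split.
- move=> R HM; have [w [-> Hw]] := maj_one HM; split.
  + move=> s Hs; apply: supp_sub; exact: (part1a hp Hw Hs).
  + have [Hs Ho] := part1b hp Hw; exists (R, cstar R); split => //; exact: supp_sub.
- move=> R HM; exists (R, cstar R); exact: (part2 hp (maj_all HM)).
Qed.
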